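(* Let $(X,d)$ be a locally compact metric space with a flow $\pi$ and let $M$ be a compact subset of $X$. Then $$\Omega(M)=\bigcap_{\varepsilon>0,\,t>0}P_t(M,\varepsilon).$$
   Context: A flow is a continuous map $\pi: X\times\mathbb{R}\to X$ with $\pi(x,0)=x$ and $\pi(\pi(x,t),s)=\pi(x,t+s)$; write $x\cdot t=\pi(x,t)$. For $x,y\in X$ and $\varepsilon,t>0$, an $(\varepsilon,t)$-chain from $x$ to $y$ is a pair of finite sequences $x=x_1,x_2,\dots,x_n,x_{n+1}=y$ in $X$ and $t_1,\dots,t_n$ in $\mathbb{R}^+$ with $t_i\ge t$ and $d(x_i\cdot t_i,x_{i+1})\le\varepsilon$ for all $i=1,\dots,n$. For $x\in X$, $\Omega(x)$ is the set of $y\in X$ such that for every $\varepsilon>0$ and $t>0$ there is an $(\varepsilon,t)$-chain from $x$ to $y$; for $M\subseteq X$, $\Omega(M)=\bigcup_{x\in M}\Omega(x)$. For $\varepsilon,t>0$, $P_t(M,\varepsilon)$ is the set of $y\in X$ such that there is an $(\varepsilon,t)$-chain from $x$ to $y$ for some $x\in M$. *)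

(* Defs.v *)
From Stdlib Require Import Reals List.
Open Scope R_scope.

Section Defs.
Variable X : Type.
Variable d : X -> X -> R.

Definition is_metric : Prop :=
  (forall x y, 0 <= d x y) /\
  (forall x y, d x y = 0 <-> x = y) /\
  (forall x y, d x y = d y x) /\
  (forall x y z, d x z <= d x y + d y z).

Definition d_open (U : X -> Prop) : Prop :=
  forall x, U x -> exists r, 0 < r /\ forall y, d x y < r -> U y.

Definition d_compact (K : X -> Prop) : Prop :=
  forall (I : Type) (U : I -> X -> Prop),
    (forall i, d_open (U i)) ->
    (forall x, K x -> exists i, U i x) ->
    exists l : list I, forall x, K x -> exists i, In i l /\ U i x.

Definition d_locally_compact : Prop :=
  forall x, exists K, d_compact K /\
    exists r, 0 < r /\ forall y, d x y < r -> K y.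

Definition is_flow (pi : X -> R -> X) : Prop :=
  (forall x, pi x 0 = x) /\
  (forall x t s, pi (pi x t) s = pi x (t + s)) /\
  (forall x t eps, 0 < eps -> exists delta, 0 < delta /\
     forall y s, d x y < delta -> Rabs (t - s) < delta ->
       d (pi x t) (pi y s) < eps).

Definition chain (pi : X -> R -> X) (eps t : R) (x y : X) : Prop :=
  exists (n : nat) (xs : nat -> X) (ts : nat -> R),
    (1 <= n)%nat /\ xs 0%nat = x /\ xs n = y /\
    forall i, (i < n)%nat -> t <= ts i /\ d (pi (xs i) (ts i)) (xs (S i)) <= eps.

Definition Omega_pt (pi : X -> R -> X) (x : X) : X -> Prop :=
  fun y => forall eps t, 0 < eps -> 0 < t -> chain pi eps t x y.

Definition Omega (pi : X -> R -> X) (M : X -> Prop) : X -> Prop :=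
  fun y => exists x, M x /\ Omega_pt pi x y.

Definition P (pi : X -> R -> X) (t : R) (M : X -> Prop) (eps : R) : X -> Prop :=
  fun y => exists x, M x /\ chain pi eps t x y.
End Defs.

(* Main.v *)
Require Import Defs.
From Stdlib Require Import Reals List Lra Lia Classical.
Open Scope R_scope.

Lemma fmin_pos {A : Type} (f : A -> R) (l : list A) :
  (forall a, 0 < f a) -> 0 < fold_right (fun i a => Rmin (f i) a) 1 l.
Proof.
  intro H; induction l as [|a l IH]; simpl; [lra|].
  apply Rmin_glb_lt; auto.
Qed.

Lemma fmin_le {A : Type} (f : A -> R) (l : list A) i :
  In i l -> fold_right (fun i a => Rmin (f i) a) 1 l <= f i.
Proof.
  induction l as [|a l IH]; simpl; [tauto|].
  intros [<-|Hi]; [apply Rmin_l|].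
  eapply Rle_trans; [apply Rmin_r| auto].
Qed.

Lemma fmax_pos {A : Type} (f : A -> R) (l : list A) :
  0 < fold_right (fun i a => Rmax (f i) a) 1 l.
Proof.
  induction l as [|a l IH]; simpl; [lra|].
  eapply Rlt_le_trans; [apply IH|apply Rmax_r].
Qed.

Lemma fmax_le {A : Type} (f : A -> R) (l : list A) i :
  In i l -> f i <= fold_right (fun i a => Rmax (f i) a) 1 l.
Proof.
  induction l as [|a l IH]; simpl; [tauto|].
  intros [<-|Hi]; [apply Rmax_l|].
  eapply Rle_trans; [auto| apply Rmax_r].
Qed.

Record cov (X : Type) := mkC { cx : X; ce : R; ct : R; cdl : R }.
Arguments cx {X}. Arguments ce {X}. Arguments ct {X}. Arguments cdl {X}.

Theorem lemma3p3 (X : Type) (d : X -> X -> R) (pi : X -> R -> X) (M : X -> Prop) :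
  is_metric X d -> d_locally_compact X d -> is_flow X d pi -> d_compact X d M ->
  forall y, Omega X d pi M y <->
    (forall eps t, 0 < eps -> 0 < t -> P X d pi t M eps y).
Proof.
  intros Hm _ Hf Hc y. split.
  - intros [x [Mx Ho]] eps t He Ht. exists x; split; auto.
  - intros HP. apply NNPP; intro Hno.
    assert (Hx: forall x, M x -> exists e t, 0<e /\ 0<t /\ ~ chain X d pi e t x y).
    { intros x Mx. apply NNPP; intro H. apply Hno. exists x; split; auto.
      intros e t He Ht. apply NNPP; intro Hc'. apply H; exists e, t; auto. }
    set (Q := fun c : cov X => M (cx c) /\ 0 < ce c /\ 0 < ct c /\ 0 < cdl c /\
                ~ chain X d pi (ce c) (ct c) (cx c) y /\
                forall z s, d (cx c) z < cdl c -> Rabs (ct c - s) < cdl c ->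
                   d (pi (cx c) (ct c)) (pi z s) < ce c / 2).
    destruct Hm as [Hd0 [Hdeq [Hsym Htri]]].
    destruct Hf as [Hf0 [Hfadd Hfc]].
    destruct (Hc (sig Q) (fun i z => d (cx (proj1_sig i)) z < cdl (proj1_sig i))) as [l Hl].
    + intros [c Qc] z Hz. simpl in *. exists (cdl c - d (cx c) z). split; [lra|].
      intros w Hw. specialize (Htri (cx c) z w). lra.
    + intros x Mx. destruct (Hx x Mx) as [e [t [He [Ht Hn]]]].
      destruct (Hfc x t (e/2)) as [del [Hdel Hcont]]; [lra|].
      assert (Qc : Q (mkC X x e t del)) by (unfold Q; simpl; repeat split; auto).
      exists (exist Q _ Qc). simpl. rewrite (proj2 (Hdeq x x) eq_refl). lra.
    + set (eps := fold_right (fun i a => Rmin ((fun i : sig Q => ce (proj1_sig i) / 2) i) a) 1 l).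
      set (T := fold_right (fun i a => Rmax ((fun i : sig Q => ct (proj1_sig i)) i) a) 1 l).
      assert (Heps : 0 < eps).
      { apply fmin_pos. intros [c Qc]. simpl. destruct Qc as [_ [? _]]. lra. }
      assert (HT : 0 < T) by apply fmax_pos.
      destruct (HP eps (2*T)) as [z [Mz [n [xs [ts [Hn1 [Hx0 [Hxn Hst]]]]]]]]; [lra|lra|].
      destruct (Hl z Mz) as [[c Qc] [Hin Hu]]. simpl in Hu.
      pose proof (fmin_le (fun i : sig Q => ce (proj1_sig i) / 2) l _ Hin) as Hle1.
      pose proof (fmax_le (fun i : sig Q => ct (proj1_sig i)) l _ Hin) as Hle2.
      fold eps in Hle1. fold T in Hle2. simpl in Hle1, Hle2.
      pose proof Qc as Qc2; destruct Qc2 as [_ [Hce [Hct [Hcdl [Hnc Hcc]]]]].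
      apply Hnc.
      exists (S n), (fun i => match i with 0%nat => cx c | 1%nat => pi z (ct c) | S k => xs k end),
        (fun i => match i with 0%nat => ct c | 1%nat => ts 0%nat - ct c | S k => ts k end).
      split; [lia|]. split; [reflexivity|]. split.
      { destruct n as [|n]; [lia|]. exact Hxn. }
      intros i Hi. destruct i as [|[|k]].
      * split; [lra|]. subst z.
        assert (H := Hcc (xs 0%nat) (ct c) Hu).
        rewrite Rminus_diag, Rabs_R0 in H. specialize (H Hcdl). simpl. lra.
      * destruct (Hst 0%nat ltac:(lia)) as [Ht0 Hd0'].
        split; [lra|]. simpl. rewrite Hfadd.
        replace (ct c + (ts 0%nat - ct c)) with (ts 0%nat) by ring.
        subst z. lra.
      * destruct (Hst (S k) ltac:(lia)) as [Ht0 Hd0'].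
        split; [lra|]. simpl. lra.
Qed.
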